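(* Let $\Gamma_2$ be a finite alphabet and $n\in\mathbb N$. There is a pushdown automaton with $3n+3$ states and stack alphabet consisting of two symbols, in whose runs the stack height never exceeds $n$, whose language is exactly $(\Gamma_2)^{2^{n+1}}$.
   Context: A pushdown automaton has transitions labelled by a letter or $\epsilon$ and a stack operation (push a symbol, pop a symbol, or no operation); it accepts a word if there is a run from the initial state with empty stack reading the word and ending in a final state with empty stack. *)

(* Defs.v *)
From mathcomp Require Import all_boot.
Set Implicit Arguments. Unset Strict Implicit. Unset Printing Implicit Defensive.

Inductive stack_op (G : Type) := Push of G | Pop of G | Nop.

(* A transition (p, a, o, q) goes from p to q,
   reads a (None = epsilon), and performs stack operation o. *)
Record pda (Sigma Q G : finType) := Pda {
  pda_init  : Q;
  pda_final : pred Q;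
  pda_trans : (Q * option Sigma * stack_op G * Q) -> Prop
}.

(* Effect of a stack operation on a stack (top of stack = head of the list);
   None means the operation is not applicable (pop of a different/absent symbol). *)
Definition apply_op (G : eqType) (o : stack_op G) (s : seq G) : option (seq G) :=
  match o with
  | Push g => Some (g :: s)
  | Pop g => match s with
             | h :: t => if h == g then Some t else None
             | [::] => None
             end
  | Nop => Some s
  end.

Definition label_word (Sigma : Type) (a : option Sigma) : seq Sigma :=
  match a with Some x => [:: x] | None => [::] end.

Inductive run (Sigma Q G : finType) (A : pda Sigma Q G) :
    Q -> seq G -> seq Sigma -> Q -> seq G -> Prop :=
  | run_nil p s : run A p s [::] p s
  | run_step p s a o p' s' w q t :
      pda_trans A (p, a, o, p') -> apply_op o s = Some s' ->
      run A p' s' w q t ->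
      run A p s (label_word a ++ w) q t.

Definition accepts (Sigma Q G : finType) (A : pda Sigma Q G) (w : seq Sigma) : Prop :=
  exists q, pda_final A q /\ run A (pda_init A) [::] w q [::].

Definition stack_bounded (Sigma Q G : finType) (A : pda Sigma Q G) (h : nat) : Prop :=
  forall w q t, run A (pda_init A) [::] w q t -> size t <= h.

(* Main.v *)
Require Import Defs.
From mathcomp Require Import all_boot.
From mathcomp Require Import zify.
Set Implicit Arguments. Unset Strict Implicit.

Section Cons.
Variables (Sigma : finType) (n : nat).

Definition QT := ('I_n.+1 * 'I_3)%type.

Definition tr (x : QT * option Sigma * stack_op bool * QT) : Prop :=
  let p := x.1.1.1 in let a := x.1.1.2 in let o := x.1.2 in let q := x.2 in
  let pk := nat_of_ord p.1 in let pp := nat_of_ord p.2 in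
  let qk := nat_of_ord q.1 in let qp := nat_of_ord q.2 in
  (pk = 0 /\ pp = 0 /\ qk = 0 /\ qp = 1 /\ a <> None /\ o = Nop bool) \/
  (pk = 0 /\ pp = 1 /\ qk = 0 /\ qp = 2 /\ a <> None /\ o = Nop bool) \/
  (pk = qk.+1 /\ pp = 0 /\ qp = 0 /\ a = None /\ o = Push false) \/
  (qk = pk.+1 /\ pp = 2 /\ qp = 1 /\ a = None /\ o = Pop false) \/
  (pk = qk.+1 /\ pp = 1 /\ qp = 0 /\ a = None /\ o = Push true) \/
  (qk = pk.+1 /\ pp = 2 /\ qp = 2 /\ a = None /\ o = Pop true).

Definition st (k ph : nat) : QT := (inord k, inord ph).

Definition Ap : pda Sigma QT bool :=
  Pda (st n 0) (fun q : QT => (nat_of_ord q.1 == n) && (nat_of_ord q.2 == 2)) tr.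

Fixpoint sval (e : nat) (s : seq bool) : nat :=
  match s with [::] => 0 | b :: s' => b * 2 ^ e + sval e.+1 s' end.

Definition phi (q : QT) (s : seq bool) : nat :=
  q.2 * 2 ^ q.1 + sval (q.1).+1 s.

Lemma step_phi p a o q s s' :
  tr (p, a, o, q) -> apply_op o s = Some s' ->
  phi q s' = phi p s + size (label_word a).
Proof.
rewrite /phi.
case: p q => [pk pp] [qk qp]; rewrite /tr /=.
move=> [[H1 [H2 [H3 [H4 [H5 H6]]]]]|[[H1 [H2 [H3 [H4 [H5 H6]]]]]|
  [[H1 [H2 [H3 [H5 H6]]]]|[[H1 [H2 [H3 [H5 H6]]]]|
  [[H1 [H2 [H3 [H5 H6]]]]|[H1 [H2 [H3 [H5 H6]]]]]]]]]; subst o.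
- case: a H5 => [x _ /= [<-]|/(_ erefl) []]. rewrite H1 H2 H3 H4 /=. lia.
- case: a H5 => [x _ /= [<-]|/(_ erefl) []]. rewrite H1 H2 H3 H4 /=. lia.
- subst a => -[<-] /=. rewrite H1 H2 H3 /= expnS. lia.
- subst a. case: s => // b t /=. case: b => //= -[<-].
  rewrite H1 H2 H3 /= !expnS. lia.
- subst a => -[<-] /=. rewrite H1 H2 H3 /= expnS. lia.
- subst a. case: s => // b t /=. case: b => //= -[<-].
  rewrite H1 H2 H3 /= !expnS. lia.
Qed.

Lemma run_phi p s w q t : run Ap p s w q t -> phi q t = phi p s + size w.
Proof.
elim => [p0 s0|p0 s0 a o p' s' w0 q0 t0 Ht Ho _ IH]; first by rewrite addn0.
rewrite IH (step_phi Ht Ho) size_cat; lia.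
Qed.

Lemma step_size p a o q s s' :
  tr (p, a, o, q) -> apply_op o s = Some s' ->
  size s + p.1 = n -> size s' + q.1 = n.
Proof.
case: p q => [pk pp] [qk qp]; rewrite /tr /=.
move=> [[H1 [H2 [H3 [H4 [H5 H6]]]]]|[[H1 [H2 [H3 [H4 [H5 H6]]]]]|
  [[H1 [H2 [H3 [H5 H6]]]]|[[H1 [H2 [H3 [H5 H6]]]]|
  [[H1 [H2 [H3 [H5 H6]]]]|[H1 [H2 [H3 [H5 H6]]]]]]]]]; subst o.
- move=> [<-]; lia.
- move=> [<-]; lia.
- move=> [<-] /=; lia.
- case: s => // b t /=. case: b => //= -[<-]; lia.
- move=> [<-] /=; lia.
- case: s => // b t /=. case: b => //= -[<-]; lia.
Qed.

Lemma run_size p s w q t : run Ap p s w q t ->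
  size s + p.1 = n -> size t + q.1 = n.
Proof.
elim => [//|p0 s0 a o p' s' w0 q0 t0 Ht Ho _ IH] H.
by apply: IH; apply: (step_size Ht Ho).
Qed.

Lemma run_cat p s w1 q t w2 r u :
  run Ap p s w1 q t -> run Ap q t w2 r u -> run Ap p s (w1 ++ w2) r u.
Proof.
elim => [//|p0 s0 a o p' s' w0 q0 t0 Ht Ho _ IH] H.
rewrite -catA; apply: run_step Ht Ho _; exact: IH.
Qed.

Lemma eps_step p o p' s s' w q t :
  tr (p, None, o, p') -> apply_op o s = Some s' ->
  run Ap p' s' w q t -> run Ap p s w q t.
Proof. move=> H1 H2 H3. exact (@run_step _ _ _ Ap p s None o p' s' w q t H1 H2 H3). Qed.

Lemma stv1 k ph (Hk : k <= n) : nat_of_ord (st k ph).1 = k.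
Proof. by rewrite /st /= inordK. Qed.
Lemma stv2 k ph (Hp : ph < 3) : nat_of_ord (st k ph).2 = ph.
Proof. by rewrite /st /= inordK. Qed.

Lemma complete k : k <= n -> forall w s, size w = 2 ^ k.+1 ->
  run Ap (st k 0) s w (st k 2) s.
Proof.
elim: k => [_|k IH Hk] w s Hw.
- case: w Hw => [|x [|y [|z w]]] //= _.
  have := @run_step _ _ _ Ap (st 0 0) s (Some x) (Nop bool) (st 0 1) s [:: y] (st 0 2) s.
  apply => //.
  + rewrite /= /tr /= !stv1 ?stv2 //; by left; do 5! split => //.
  + have := @run_step _ _ _ Ap (st 0 1) s (Some y) (Nop bool) (st 0 2) s [::] (st 0 2) s.
    apply => //; last exact: run_nil.
    rewrite /= /tr /= !stv1 ?stv2 //; by right; left; do 5! split => //.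
- have Hk' : k <= n by lia.
  have Hs : size (take (2 ^ k.+1) w) = 2 ^ k.+1.
    rewrite size_takel // Hw (expnS 2 k.+1); lia.
  have Hs2 : size (drop (2 ^ k.+1) w) = 2 ^ k.+1.
    rewrite size_drop Hw (expnS 2 k.+1); lia.
  rewrite -(cat_take_drop (2 ^ k.+1) w).
  apply: (@eps_step _ (Push false) (st k 0) _ (false :: s)) => //.
    rewrite /= /tr /= !stv1 ?stv2 //; do 2! right; left; do 5! split => //.
  apply: run_cat; first exact: IH.
  apply: (@eps_step _ (Pop false) (st k.+1 1) _ s) => //.
    rewrite /= /tr /= !stv1 ?stv2 //; do 3! right; left; do 5! split => //.
  apply: (@eps_step _ (Push true) (st k 0) _ (true :: s)) => //.
    rewrite /= /tr /= !stv1 ?stv2 //; do 4! right; left; do 5! split => //.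
  rewrite -[drop _ _]cats0.
  apply: run_cat; first exact: IH.
  apply: (@eps_step _ (Pop true) (st k.+1 2) _ s) => //; last exact: run_nil.
    rewrite /= /tr /= !stv1 ?stv2 //; do 5! right; do 5! split => //.
Qed.

End Cons.

Theorem claim4p6 (Gamma2 : finType) (n : nat) :
  exists (Q G : finType) (A : pda Gamma2 Q G),
    #|Q| = 3 * n + 3 /\ #|G| = 2 /\ stack_bounded A n /\
    (forall w : seq Gamma2, accepts A w <-> size w = 2 ^ n.+1).
Proof.
exists (QT n), bool, (@Ap Gamma2 n).
split; first by rewrite /QT card_prod !card_ord; lia.
split; first by rewrite card_bool.
split.
  move=> w q t /run_size H.
  have := H; rewrite /= !stv1 ?stv2 // => /(_ erefl); lia.
move=> w; split.
  move=> [q [/andP [/eqP H1 /eqP H2] Hr]].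
  have := run_phi Hr; rewrite /phi /= H1 H2 !stv1 ?stv2 //= expnS; lia.
move=> Hw; exists (st n n 2); split; last exact: complete.
by rewrite /= !stv1 ?stv2 // !eqxx.
Qed.
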